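(* Let $n$, $r$, $a$ be positive integers with $n=2r+1$ and $a\ge 2$. Then $$\rho_2(K(n+2a,r+a))\ \ge\ 2\,\rho_2(K(n,r)).$$
   Context: For integers $n\ge 2r$, the Kneser graph $K(n,r)$ has as vertices the $r$-element subsets of $[n]=\{1,\dots,n\}$, two vertices being adjacent iff they are disjoint. A $2$-packing of a graph $G$ is a set of vertices pairwise at distance at least $3$ in $G$; $\rho_2(G)$ is the maximum cardinality of a $2$-packing. *)

(* Defs.v *)
From mathcomp Require Import all_boot all_order.
Set Implicit Arguments. Unset Strict Implicit. Unset Printing Implicit Defensive.

Definition kneser_vertex (n r : nat) (A : {set 'I_n}) : bool := #|A| == r.

Definition kneser_adj (n r : nat) (A B : {set 'I_n}) : bool :=
  [&& kneser_vertex r A, kneser_vertex r B & [disjoint A & B]].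

(* distance at least 3 in K(n,r) between distinct vertices u, v:
   not adjacent and no common neighbour. *)
Definition kneser_far (n r : nat) (A B : {set 'I_n}) : bool :=
  ~~ kneser_adj r A B &&
  [forall C : {set 'I_n}, ~~ (kneser_adj r A C && kneser_adj r C B)].

Definition two_packing (n r : nat) (P : {set {set 'I_n}}) : bool :=
  [forall A in P, kneser_vertex r A] &&
  [forall A in P, forall B in P, (A != B) ==> kneser_far r A B].

Definition rho2_kneser (n r : nat) : nat :=
  \max_(P : {set {set 'I_n}} | two_packing r P) #|P|.

(* Main.v *)
Require Import Defs.
From mathcomp Require Import all_boot all_order.
From mathcomp Require Import zify.

Lemma cardsU_disj (T : finType) (A B : {set T}) :
  (forall x, x \in A -> x \notin B) -> #|A :|: B| = #|A| + #|B|.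
Proof.
move=> d; rewrite cardsU.
have -> : A :&: B = set0.
  apply/setP => x; rewrite !inE; apply/negP => /andP [xA xB].
  by move: (d x xA); rewrite xB.
by rewrite cards0 subn0.
Qed.

Lemma far_of N R (A B : {set 'I_N}) :
  #|A| = R -> #|B| = R -> A :&: B != set0 -> N < #|A :|: B| + R ->
  kneser_far R A B.
Proof.
move=> hA hB hI hU; rewrite /kneser_far /kneser_adj; apply/andP; split.
  apply/negP => /and3P [_ _ d]; move: hI; by rewrite setI_eq0 d.
apply/forallP => C; apply/negP => /andP [/and3P [_ hC dAC] /and3P [_ _ dCB]].
move/eqP: hC => hC.
have : #|C :|: (A :|: B)| <= N by rewrite -[X in _ <= X]card_ord max_card.
rewrite cardsU_disj.
  by rewrite hC; lia.
move=> x xC; rewrite inE negb_or; apply/andP; split.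
  by rewrite (disjointFl dAC xC).
by rewrite (disjointFr dCB xC).
Qed.

Lemma subset_card_ex (T : finType) (D : {set T}) k :
  k <= #|D| -> exists2 C : {set T}, C \subset D & #|C| = k.
Proof.
elim: k => [|k IH] hk.
  by exists set0; [exact: sub0set | exact: cards0].
have [C sCD hC] := IH (ltnW hk).
have : 0 < #|D :\: C|.
  rewrite cardsD (setIidPr sCD); lia.
rewrite card_gt0 => /set0Pn [x]; rewrite inE => /andP [xC xD].
exists (x |: C).
  by rewrite subUset sub1set xD sCD.
by rewrite cardsU1 xC hC.
Qed.

Lemma small_far r (A B : {set 'I_(2 * r + 1)}) :
  #|A| = r -> #|B| = r -> kneser_far r A B ->
  A :&: B != set0 /\ r + 1 < #|A :|: B|.
Proof.
move=> hA hB /andP [nadj /forallP hC]; split.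
  rewrite setI_eq0; apply: contra nadj => d.
  by rewrite /kneser_adj /kneser_vertex hA hB !eqxx d.
rewrite ltnNge; apply/negP => hU.
have hD : r <= #|~: (A :|: B)|.
  have := cardsC (A :|: B); rewrite card_ord; lia.
have [C sC hCr] := subset_card_ex _ _ _ hD.
move: (hC C); rewrite /kneser_adj /kneser_vertex hA hB hCr !eqxx /=.
have dAC : [disjoint A & C].
  rewrite -setI_eq0; apply/eqP/setP => x; rewrite !inE.
  apply/negP => /andP [xA xC].
  by move: (subsetP sC x xC); rewrite !inE xA.
have dCB : [disjoint C & B].
  rewrite -setI_eq0; apply/eqP/setP => x; rewrite !inE.
  apply/negP => /andP [xC xB].
  by move: (subsetP sC x xC); rewrite !inE xB orbT.
by rewrite dAC dCB.
Qed.

Lemma xj_proof n a (j : 'I_a) : n + j < n + 2 * a.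
Proof. have := ltn_ord j; lia. Qed.
Lemma yj_proof n a (j : 'I_a) : n + a + j < n + 2 * a.
Proof. have := ltn_ord j; lia. Qed.

Section Constr.
Variables n a : nat.
Let N := n + 2 * a.
Definition fe (i : 'I_n) : 'I_N := widen_ord (leq_addr _ _) i.
Definition xj (j : 'I_a) : 'I_N := Ordinal (@xj_proof n a j).
Definition yj (j : 'I_a) : 'I_N := Ordinal (@yj_proof n a j).
Definition XX : {set 'I_N} := [set xj j | j : 'I_a].
Definition YY : {set 'I_N} := [set yj j | j : 'I_a].
Definition gg (A : {set 'I_n}) : {set 'I_N} := fe @: A :|: XX.
Definition hh (A : {set 'I_n}) : {set 'I_N} := fe @: A :|: YY.

Lemma fe_inj : injective fe.
Proof. by move=> i j /(congr1 val) /= /val_inj. Qed.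
Lemma xj_inj : injective xj.
Proof. move=> i j /(congr1 val) /= h; apply/val_inj => /=; lia. Qed.
Lemma yj_inj : injective yj.
Proof. move=> i j /(congr1 val) /= h; apply/val_inj => /=; lia. Qed.

Lemma cardX : #|XX| = a.
Proof. by rewrite card_imset ?card_ord //; exact: xj_inj. Qed.
Lemma cardY : #|YY| = a.
Proof. by rewrite card_imset ?card_ord //; exact: yj_inj. Qed.
Lemma cardf (A : {set 'I_n}) : #|fe @: A| = #|A|.
Proof. by rewrite card_imset //; exact: fe_inj. Qed.

Lemma fe_notX i : fe i \notin XX.
Proof.
apply/imsetP => [[j _ /(congr1 val) /= h]]; have := ltn_ord i; lia.
Qed.
Lemma fe_notY i : fe i \notin YY.
Proof.
apply/imsetP => [[j _ /(congr1 val) /= h]]; have := ltn_ord i; lia.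
Qed.
Lemma X_notY x : x \in XX -> x \notin YY.
Proof.
move=> /imsetP [j _ ->]; apply/imsetP => [[k _ /(congr1 val) /= h]].
have := ltn_ord j; lia.
Qed.

Lemma f_notX (A : {set 'I_n}) x : x \in fe @: A -> x \notin XX.
Proof. by move=> /imsetP [i _ ->]; exact: fe_notX. Qed.
Lemma f_notY (A : {set 'I_n}) x : x \in fe @: A -> x \notin YY.
Proof. by move=> /imsetP [i _ ->]; exact: fe_notY. Qed.

Arguments f_notX {A x}.
Arguments f_notY {A x}.

Lemma cardg A : #|gg A| = #|A| + a.
Proof. by rewrite /gg cardsU_disj ?cardf ?cardX //; by move=> x; exact: f_notX. Qed.
Lemma cardh A : #|hh A| = #|A| + a.
Proof. by rewrite /hh cardsU_disj ?cardf ?cardY //; by move=> x; exact: f_notY. Qed.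

Lemma mem_fg A i : (fe i \in gg A) = (i \in A).
Proof.
rewrite /gg inE (negbTE (fe_notX i)) orbF.
by rewrite (mem_imset _ _ fe_inj).
Qed.
Lemma mem_fh A i : (fe i \in hh A) = (i \in A).
Proof.
rewrite /hh inE (negbTE (fe_notY i)) orbF.
by rewrite (mem_imset _ _ fe_inj).
Qed.

Lemma gg_inj : injective gg.
Proof. move=> A B h; apply/setP => i; by rewrite -!mem_fg h. Qed.
Lemma hh_inj : injective hh.
Proof. move=> A B h; apply/setP => i; by rewrite -!mem_fh h. Qed.

Lemma X_ne : 0 < a -> XX != set0.
Proof. by move=> ha; rewrite -card_gt0 cardX. Qed.

Lemma gg_ne_hh A B : 0 < a -> gg A != hh B.
Proof.
move=> ha; have /set0Pn [x xX] := X_ne ha.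
apply/eqP => e.
have : x \in gg A by rewrite /gg inE xX orbT.
rewrite e /hh inE => /orP [/f_notX|]; first by rewrite xX.
by rewrite (negbTE (X_notY _ xX)).
Qed.

Lemma gg_gg_I A B : 0 < a -> gg A :&: gg B != set0.
Proof.
move=> ha; have /set0Pn [x xX] := X_ne ha.
by apply/set0Pn; exists x; rewrite !inE xX !orbT.
Qed.

Lemma gg_gg_U A B : #|gg A :|: gg B| = #|A :|: B| + a.
Proof.
have -> : gg A :|: gg B = gg (A :|: B).
  by rewrite /gg imsetU setUACA setUid.
exact: cardg.
Qed.

Lemma hh_hh_I A B : 0 < a -> hh A :&: hh B != set0.
Proof.
move=> ha; have : 0 < #|YY| by rewrite cardY.
rewrite card_gt0 => /set0Pn [x xY].
by apply/set0Pn; exists x; rewrite !inE xY !orbT.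
Qed.

Lemma hh_hh_U A B : #|hh A :|: hh B| = #|A :|: B| + a.
Proof.
have -> : hh A :|: hh B = hh (A :|: B).
  by rewrite /hh imsetU setUACA setUid.
exact: cardh.
Qed.

Lemma gg_hh_I A B : A :&: B != set0 -> gg A :&: hh B != set0.
Proof.
move=> /set0Pn [i]; rewrite inE => /andP [iA iB].
by apply/set0Pn; exists (fe i); rewrite inE mem_fg mem_fh iA iB.
Qed.

Lemma gg_hh_U (A B : {set 'I_n}) : #|A| + 2 * a <= #|gg A :|: hh B|.
Proof.
have sub : (fe @: A :|: XX) :|: YY \subset gg A :|: hh B.
  apply/subsetP => x; rewrite /gg /hh !inE -!orbA.
  by case/or3P => ->; rewrite ?orbT.
apply: leq_trans (subset_leq_card sub).
rewrite cardsU_disj; last first.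
  move=> x; rewrite inE => /orP [/f_notY //|]; exact: X_notY.
rewrite cardsU_disj ?cardf ?cardX ?cardY; first lia.
by move=> x; exact: f_notX.
Qed.

End Constr.

Lemma rho2_attained n r :
  exists2 P : {set {set 'I_n}}, two_packing r P & rho2_kneser n r = #|P|.
Proof.
rewrite /rho2_kneser.
apply: (big_ind (fun m => exists2 P, two_packing r P & m = #|P|)).
- exists set0; last by rewrite cards0.
  by apply/andP; split; apply/forallP => A; rewrite inE.
- move=> x y [P1 h1 e1] [P2 h2 e2].
  case: (leqP x y) => hxy.
    by exists P2 => //; rewrite (maxn_idPr hxy).
  by exists P1 => //; rewrite (maxn_idPl (ltnW hxy)).
- by move=> P hP; exists P.
Qed.

Theorem proposition4p3 (n r a : nat) :
  0 < n -> 0 < r -> 0 < a -> n = 2 * r + 1 -> 2 <= a ->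
  2 * rho2_kneser n r <= rho2_kneser (n + 2 * a) (r + a).
Proof.
move=> _ hr ha hn h2a; subst n.
have [P /andP [/forallP hV /forallP hF] ->] := rho2_attained (2 * r + 1) r.
set n := 2 * r + 1.
have hV' A : A \in P -> #|A| = r by move=> AP; apply/eqP; exact: (implyP (hV A) AP).
have hF' A B : A \in P -> B \in P -> A != B -> kneser_far r A B.
  move=> AP BP AB; move: (hF A); rewrite AP /= => /forallP /(_ B).
  by rewrite BP AB.
have hI A B : A \in P -> B \in P -> A :&: B != set0.
  move=> AP BP; case: (eqVneq A B) => [<-|AB].
    by rewrite setIid -card_gt0 (hV' A AP).
  by case: (small_far _ _ _ (hV' A AP) (hV' B BP) (hF' A B AP BP AB)).
pose Q := (@gg n a @: P) :|: (@hh n a @: P).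
have cQ : #|Q| = 2 * #|P|.
  rewrite cardsU_disj.
    rewrite !card_imset; first by rewrite addnn; symmetry; exact: mul2n.
      exact: hh_inj.
    exact: gg_inj.
  move=> x /imsetP [A _ ->]; apply/imsetP => [[B _ /eqP]].
  by rewrite (negbTE (@gg_ne_hh n a A B ha)).
rewrite -cQ; apply: leq_bigmax_cond.
apply/andP; split.
  apply/forallP => A'; apply/implyP; rewrite inE => /orP [] /imsetP [A AP ->].
    by rewrite /kneser_vertex cardg (hV' A AP).
  by rewrite /kneser_vertex cardh (hV' A AP).
have cross A B : A \in P -> B \in P ->
    kneser_far (r + a) (gg n a A) (hh n a B) /\ kneser_far (r + a) (hh n a B) (gg n a A).
  move=> AP BP.
  split; apply: far_of; rewrite ?cardg ?cardh ?(hV' A AP) ?(hV' B BP) //.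
  - exact: (@gg_hh_I n a A B (hI A B AP BP)).
  - have := @gg_hh_U n a A B; rewrite (hV' A AP); lia.
  - by rewrite setIC; exact: (@gg_hh_I n a A B (hI A B AP BP)).
  - rewrite setUC; have := @gg_hh_U n a A B; rewrite (hV' A AP); lia.
apply/forallP => A'; apply/implyP; rewrite inE => /orP [] /imsetP [A AP ->];
  apply/forallP => B'; apply/implyP; rewrite inE => /orP [] /imsetP [B BP ->];
  apply/implyP => ne.
- have AB : A != B by apply: contra ne => /eqP ->.
  have [_ hU] := small_far _ _ _ (hV' A AP) (hV' B BP) (hF' A B AP BP AB).
  apply: far_of; rewrite ?cardg ?(hV' A AP) ?(hV' B BP) //.
    exact: (@gg_gg_I n a A B ha).
  rewrite gg_gg_U; move: hU; rewrite /n; lia.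
- by case: (cross A B AP BP).
- by case: (cross B A BP AP).
- have AB : A != B by apply: contra ne => /eqP ->.
  have [_ hU] := small_far _ _ _ (hV' A AP) (hV' B BP) (hF' A B AP BP AB).
  apply: far_of; rewrite ?cardh ?(hV' A AP) ?(hV' B BP) //.
    exact: (@hh_hh_I n a A B ha).
  rewrite hh_hh_U; move: hU; rewrite /n; lia.
Qed.
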